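(* Let $p < q$ be primes with $p, q \geq 3$ and $n = pq$. Then the total graph $T(\Gamma(\mathbb{Z}_n))$ is very cost effective.
   Context: $\mathbb{Z}_n$ is the ring of residue classes modulo $n$. The zero-divisor graph $\Gamma(\mathbb{Z}_n)$ has as vertices the nonzero zero-divisors of $\mathbb{Z}_n$, two distinct vertices being adjacent iff their product is $0$. The total graph $T(G)$ of a graph $G$ has vertex set $V(G)\cup E(G)$, with two vertices adjacent iff they are adjacent vertices of $G$, adjacent edges of $G$ (sharing an endpoint), or a vertex and an edge of $G$ incident to each other. For a graph $H=(V,E)$ and $S\subseteq V$, a vertex $v\in S$ is very cost effective if $|N(v)\cap S| < |N(v)\cap (V\setminus S)|$; $S$ is very cost effective if every vertex of $S$ is. A bipartition $\{S, V\setminus S\}$ is very cost effective if both parts are very cost effective, and $H$ is very cost effective if it has a very cost effective bipartition. *)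

(* Defs.v *)
From mathcomp Require Import all_boot.
Set Implicit Arguments. Unset Strict Implicit. Unset Printing Implicit Defensive.

(* A finite simple graph is given by a vertex set [V : {set T}] inside a
   finType [T] and an adjacency relation [adj : rel T] (only its values on
   pairs of distinct vertices of V matter). *)

Definition zd_vertices (n : nat) : {set 'I_n} :=
  [set x : 'I_n | (val x != 0) &&
     [exists y : 'I_n, (val y != 0) && ((val x * val y) %% n == 0)]].

Definition zd_adj (n : nat) : rel 'I_n :=
  fun x y => (x != y) && ((val x * val y) %% n == 0).

Section Total.
Variables (T : finType) (V : {set T}) (adj : rel T).

Definition gedges : {set {set T}} :=
  [set e : {set T} | [exists u in V, exists v in V,
     [&& u != v, adj u v & e == [set u; v]]]].

Definition total_vertices : {set (T + {set T})} :=
  [set x | match x with inl v => v \in V | inr e => e \in gedges end].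

Definition total_adj : rel (T + {set T}) :=
  fun x y => match x, y with
  | inl u, inl v => (u != v) && adj u v
  | inr e, inr f => (e != f) && (e :&: f != set0)
  | inl v, inr e => v \in e
  | inr e, inl v => v \in e
  end.
End Total.

Section VCE.
Variables (U : finType) (W : {set U}) (r : rel U).

Definition nbhd (v : U) : {set U} := [set w in W | (w != v) && r v w].

Definition vce_vertex (S : {set U}) (v : U) : bool :=
  #|nbhd v :&: S| < #|nbhd v :&: (W :\: S)|.

Definition vce_set (S : {set U}) : bool := [forall v in S, vce_vertex S v].

Definition vce_bipartition (S : {set U}) : bool :=
  [&& S \subset W, vce_set S & vce_set (W :\: S)].

Definition very_cost_effective : Prop := exists S : {set U}, vce_bipartition S.
End VCE.

(* Main.v *)
Require Import Defs.
From mathcomp Require Import all_boot zify.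
Set Implicit Arguments. Unset Strict Implicit. Unset Printing Implicit Defensive.

Definition flipF (d x : nat) := if odd (x %/ d) then x + d else x - d.

Lemma flipF_prop N d x : 0 < d -> odd d -> d %| N -> odd (N %/ d) ->
  0 < x < N -> d %| x ->
  [/\ 0 < flipF d x < N, d %| flipF d x,
      (forall c, odd (c + flipF d x) = ~~ odd (c + x)) & flipF d (flipF d x) = x].
Proof.
move=> d0 od dN ok /andP[x0 xN] dx.
have eN := divnK dN; have ex := divnK dx.
move: ok eN ex x0 xN; set k := N %/ d; set i := x %/ d => ok eN ex x0 xN.
rewrite /flipF -/i.
have i0 : 0 < i by apply: contraTT x0; rewrite -leqNgt leqn0 => /eqP i0; rewrite -ex i0.
have ik : i < k by rewrite -(ltn_pmul2r d0) eN ex.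
case oi: (odd i).
- have ik1 : i.+1 < k.
    rewrite ltn_neqAle ik andbT; apply/negP => /eqP ek.
    by move: ok; rewrite -ek /= oi.
  have e1 : (x + d) %/ d = i.+1 by rewrite -ex -mulSnr mulnK.
  split.
  + apply/andP; split; first by lia.
    by rewrite -ex -mulSnr -eN ltn_pmul2r.
  + by rewrite dvdn_add // dvdnn.
  + by move=> c; rewrite addnA oddD od addbT.
  + by rewrite e1 /= oi /= addnK.
- have i2 : 1 < i by case: (i) i0 oi => [|[|]].
  have e1 : (x - d) %/ d = i.-1 by rewrite -ex -{2}(mul1n d) -mulnBl mulnK // subn1.
  have xd : d < x by rewrite -ex -{1}(mul1n d) ltn_pmul2r.
  split.
  + apply/andP; split; lia.
  + by rewrite dvdn_sub // dvdnn.
  + move=> c; have -> : odd (c + x) = odd (c + (x - d)) (+) odd d.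
      by rewrite -oddD -addnA subnK // ltnW.
    by rewrite od addbT negbK.
  + rewrite e1; case: (i) i2 oi => [|[|j]] //= _.
    by rewrite negbK => ->; rewrite subnK // ltnW.
Qed.

Definition mset N d c s : {set 'I_N} :=
  [set x : 'I_N | (val x != 0) && (d %| val x) && (odd (c + val x) == s)].

Lemma balance N d c s : 0 < d -> odd d -> d %| N -> odd (N %/ d) ->
  #|mset N d c s| <= #|mset N d c (~~ s)|.
Proof.
move=> d0 od dN ok.
pose f (x : 'I_N) : 'I_N := insubd x (flipF d (val x)).
have H x : x \in mset N d c s -> val (f x) = flipF d (val x) /\ f x \in mset N d c (~~ s).
  rewrite inE => /andP[/andP[x0 dx] /eqP cs].
  have [/andP[F0 FN] dF Fc _] := flipF_prop d0 od dN ok (x:=val x) (ltac:(by rewrite lt0n x0 ltn_ord)) dx.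
  have vf : val (f x) = flipF d (val x) by rewrite /f val_insubd FN.
  split=> //; by rewrite inE vf -lt0n F0 dF Fc cs eqxx.
apply: (@leq_trans #|f @: mset N d c s|).
  rewrite card_in_imset // =>  x y xX yX e.
  have [fx _] := H x xX; have [fy _] := H y yX.
  move: xX yX; rewrite !inE => /andP[/andP[x0 dx] _] /andP[/andP[y0 dy] _].
  have [_ _ _ Fx] := flipF_prop d0 od dN ok (x:=val x) (ltac:(by rewrite lt0n x0 ltn_ord)) dx.
  have [_ _ _ Fy] := flipF_prop d0 od dN ok (x:=val y) (ltac:(by rewrite lt0n y0 ltn_ord)) dy.
  by apply: val_inj; rewrite -Fx -Fy -fx -fy e.
apply: subset_leq_card; apply/subsetP => _ /imsetP[x xX ->].
by have [] := H x xX.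
Qed.

Definition setting (p q N : nat) :=
  [/\ prime p, prime q, odd p && odd q, p != q & N = p * q].

Lemma setting_sym p q N : setting p q N -> setting q p N.
Proof. by case=> ? ? /andP[? ?] ? ?; split=> //; [rewrite andbC; apply/andP | rewrite eq_sym | rewrite mulnC]. Qed.

Definition Aset N p : {set 'I_N} := [set x : 'I_N | (val x != 0) && (p %| val x)].

Lemma AB_disj p q N (x : 'I_N) : setting p q N -> x \in Aset N p -> x \in Aset N q -> False.
Proof.
case=> pp pq _ npq eN; rewrite !inE => /andP[x0 px] /andP[_ qx].
have cpq : coprime p q by rewrite prime_coprime // dvdn_prime2 // negb_and npq.
have : p * q %| val x by rewrite Gauss_dvd // px qx.
move/(dvdn_leq); rewrite lt0n x0 => /(_ isT); rewrite -eN leqNgt ltn_ord //.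
Qed.

Lemma zdV p q N (x : 'I_N) : setting p q N ->
  (x \in zd_vertices N) = (val x != 0) && ((p %| val x) || (q %| val x)).
Proof.
move=> st; case: (st) => pp pq _ npq eN.
rewrite inE; apply/idP/idP.
- case/andP=> x0 /existsP[y /andP[y0 /eqP m]].
  have Nd : p * q %| val x * val y by rewrite -eN /dvdn m.
  rewrite x0 /=; apply/negPn/negP; rewrite negb_or => /andP[npx nqx].
  have py : p %| val y by move: (dvdn_trans (dvdn_mulr q (dvdnn p)) Nd); rewrite Euclid_dvdM // (negbTE npx).
  have qy : q %| val y by move: (dvdn_trans (dvdn_mull p (dvdnn q)) Nd); rewrite Euclid_dvdM // (negbTE nqx).
  have cpq : coprime p q by rewrite prime_coprime // dvdn_prime2 // negb_and npq.
  have : p * q %| val y by rewrite Gauss_dvd // py qy.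
  move/(dvdn_leq); rewrite lt0n y0 => /(_ isT); rewrite -eN leqNgt ltn_ord //.
- case/andP=> x0 /orP[px|qx]; rewrite x0 /=.
  + have qN : q < N by rewrite eN ltn_Pmull ?prime_gt1 ?prime_gt0.
    apply/existsP; exists (Ordinal qN) => /=.
    rewrite -lt0n prime_gt0 //= -/(dvdn _ _).
    have h : p * q %| val x * q by rewrite dvdn_mul.
    by rewrite -eN in h.
  + have pN : p < N by rewrite eN ltn_Pmulr ?prime_gt1 ?prime_gt0.
    apply/existsP; exists (Ordinal pN) => /=.
    rewrite -lt0n prime_gt0 //= -/(dvdn _ _).
    have h : p * q %| val x * p by rewrite mulnC dvdn_mul.
    by rewrite -eN in h.
Qed.

Lemma adjV p q N (x y : 'I_N) : setting p q N ->
  x \in zd_vertices N -> y \in zd_vertices N ->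
  zd_adj x y = (x \in Aset N p) && (y \in Aset N q) || (x \in Aset N q) && (y \in Aset N p).
Proof.
move=> st; case: (st) => pp pq _ npq eN.
rewrite !(zdV _ st) => /andP[x0 xpq] /andP[y0 ypq].
rewrite /zd_adj !inE x0 y0 /=; apply/idP/idP.
- case/andP=> nxy /eqP m.
  have Nd : p * q %| val x * val y by rewrite -eN /dvdn m.
  have pd : p %| val x * val y := dvdn_trans (dvdn_mulr q (dvdnn p)) Nd.
  have qd : q %| val x * val y := dvdn_trans (dvdn_mull p (dvdnn q)) Nd.
  rewrite Euclid_dvdM // in pd; rewrite Euclid_dvdM // in qd.
  have dis : forall z : 'I_N, val z != 0 -> p %| val z -> q %| val z -> False.
    by move=> z z0 a b; apply: (AB_disj (x := z) st); rewrite inE ?z0 ?a ?b.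
  case px: (p %| val x); case qx: (q %| val x); case py: (p %| val y); case qy: (q %| val y) => //=;
    rewrite ?px ?qx ?py ?qy /= in pd qd xpq ypq *; try by [];
    solve [exfalso; apply: (dis x) => //; rewrite ?px ?qx | exfalso; apply: (dis y) => //; rewrite ?py ?qy].
- have cases : forall a b : 'I_N, val a != 0 -> val b != 0 -> p %| val a -> q %| val b -> (a != b) && ((val a * val b) %% N == 0).
    move=> a b a0 b0 pa qb; apply/andP; split.
      apply/eqP => eab; subst b; apply: (AB_disj (x := a) st); rewrite inE ?a0 //.
    have h : p * q %| val a * val b by rewrite dvdn_mul.
    by rewrite -eN in h.
  case/orP=> /andP[a b].
  + exact: cases.
  + have := cases y x y0 x0 b a; rewrite eq_sym mulnC //.
Qed.

Notation GE N := (gedges (zd_vertices N) (@zd_adj N)).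

Lemma AV p q N (x : 'I_N) : setting p q N -> x \in Aset N p -> x \in zd_vertices N.
Proof. by move=> st; rewrite (zdV _ st) inE => /andP[-> ->]. Qed.

Lemma BV p q N (x : 'I_N) : setting p q N -> x \in Aset N q -> x \in zd_vertices N.
Proof. by move=> st; rewrite (zdV _ st) inE => /andP[-> ->]; rewrite orbT. Qed.

Lemma gedgesP p q N (e : {set 'I_N}) : setting p q N ->
  e \in GE N <-> exists a b, [/\ a \in Aset N p, b \in Aset N q & e = [set a; b]].
Proof.
move=> st; split.
- rewrite inE => /existsP[u /andP[uV /existsP[v /andP[vV /and3P[nuv a /eqP ->]]]]].
  move: a; rewrite (adjV st uV vV) => /orP[/andP[ua vb]|/andP[ub va]].
  + by exists u, v.
  + by exists v, u; rewrite setUC.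
- case=> a [b [aA bB ->]]; rewrite inE; apply/existsP; exists a.
  rewrite (AV st aA); apply/existsP; exists b; rewrite (BV st bB) eqxx /= andbT.
  rewrite (adjV st (AV st aA) (BV st bB)) aA bB /= andbT.
  by apply/eqP => eab; subst b; apply: (AB_disj st aA bB).
Qed.

Lemma edge_uniq p q N (f : {set 'I_N}) a b : setting p q N -> f \in GE N ->
  a \in Aset N p -> b \in Aset N q -> a \in f -> b \in f -> f = [set a; b].
Proof.
move=> st /(gedgesP _ st)[a' [b' [aA bB ->]]] aA' bB'.
rewrite !inE => /orP[/eqP ->|/eqP eab]; last by subst; case: (AB_disj st aA' bB).
move=> /orP[/eqP eb|/eqP ->] //; by subst; case: (AB_disj st aA bB').
Qed.

Definition col N (e : {set 'I_N}) := odd (\sum_(v in e) val v).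

Lemma col2 N (a b : 'I_N) : a != b -> col [set a; b] = odd (val a + val b).
Proof. by move=> ab; rewrite /col big_setU1 ?big_set1 // inE. Qed.

Definition Eat N (v : 'I_N) s : {set {set 'I_N}} :=
  [set e | (e \in GE N) && (v \in e) && (col e == s)].


Lemma inEat N (v : 'I_N) s f : (f \in Eat v s) = [&& f \in GE N, v \in f & col f == s].
Proof. by rewrite /Eat in_set andbA. Qed.

Lemma card_Eat p q N (a : 'I_N) s : setting p q N -> a \in Aset N p ->
  #|Eat a s| = #|mset N q (val a) s|.
Proof.
move=> st aA.
have msB b : b \in mset N q (val a) s -> b \in Aset N q /\ odd (val a + val b) = s.
  by rewrite !inE => /andP[/andP[-> ->] /eqP ->].
have nab b : b \in Aset N q -> a != b.
  by move=> bB; apply/eqP => eab; subst b; apply: (AB_disj st aA bB).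
have -> : Eat a s = (fun b => [set a; b]) @: mset N q (val a) s.
  apply/setP => e; apply/idP/idP.
  - rewrite inE => /andP[/andP[eG ae] /eqP ce].
    move: (eG) => /(gedgesP _ st)[a' [b' [aA' bB' ee]]].
    have ea' : a = a'.
      move: ae; rewrite ee !inE => /orP[/eqP //|/eqP eab]; subst; case: (AB_disj st aA bB').
    subst a' e; apply/imsetP; exists b' => //.
    by move: (bB'); rewrite !inE -ce col2 ?nab // eqxx andbT.
  - case/imsetP=> b /msB[bB cb] ->; rewrite inE set21 andbT col2 ?nab // cb eqxx andbT.
    by apply/(gedgesP _ st); exists a, b.
apply: card_in_imset => b b' /msB[bB _] /msB[bB' _] e.
have : b \in [set a; b'] by rewrite -e set22.
rewrite !inE => /orP[/eqP eab|/eqP //]; by subst; case: (AB_disj st aA bB).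
Qed.
Lemma card_sum (T1 T2 : finType) (Z : {set T1 + T2}) :
  #|Z| = #|[set x | inl x \in Z]| + #|[set y | inr y \in Z]|.
Proof.
have eZ : Z = (@inl T1 T2) @: [set x | inl x \in Z] :|: (@inr T1 T2) @: [set y | inr y \in Z].
  apply/setP => [[x|y]]; rewrite !inE.
  - apply/idP/idP => [h|/orP[/imsetP[x' + [->]]|/imsetP[y' _ //]]]; last by rewrite inE.
    by apply/orP; left; apply/imsetP; exists x; rewrite ?inE.
  - apply/idP/idP => [h|/orP[/imsetP[x' _ //]|/imsetP[y' + [->]]]]; last by rewrite inE.
    by apply/orP; right; apply/imsetP; exists y; rewrite ?inE.
rewrite {1}eZ cardsU !card_imset; try by move=> ? ? [].
suff -> : inl @: [set x | inl x \in Z] :&: inr @: [set y | inr y \in Z] = set0 by rewrite cards0 subn0.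
apply/setP => [[x|y]]; rewrite !inE; apply/negP => /andP[h1 h2].
- by case/imsetP: h2.
- by case/imsetP: h1.
Qed.

Notation WW N := (total_vertices (zd_vertices N) (@zd_adj N)).
Notation RR N := (total_adj (@zd_adj N)).
Lemma inl_neq (T1 T2 : eqType) (x y : T1) : (inl x != inl y :> T1 + T2) = (x != y).
Proof. by apply/idP/idP; apply: contra => /eqP; [move=> -> | case=> ->]. Qed.
Lemma inr_neq (T1 T2 : eqType) (x y : T2) : (inr x != inr y :> T1 + T2) = (x != y).
Proof. by apply/idP/idP; apply: contra => /eqP; [move=> -> | case=> ->]. Qed.
Lemma inlr_neq (T1 T2 : eqType) (x : T1) (y : T2) : (inl x != inr y :> T1 + T2).
Proof. by []. Qed.
Lemma inrl_neq (T1 T2 : eqType) (x : T1) (y : T2) : (inr y != inl x :> T1 + T2).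
Proof. by []. Qed.

Lemma nb_ll N (a y : 'I_N) : (inl y \in nbhd (WW N) (RR N) (inl a)) = (y \in zd_vertices N) && zd_adj a y.
Proof.
rewrite /nbhd in_set /total_vertices in_set /= inl_neq /zd_adj eq_sym.
by case: (a != y); rewrite /= ?andbF.
Qed.
Lemma nb_lr N (a : 'I_N) e : (inr e \in nbhd (WW N) (RR N) (inl a)) = (e \in GE N) && (a \in e).
Proof. by rewrite /nbhd in_set /total_vertices in_set /=. Qed.
Lemma nb_rl N (y : 'I_N) e : (inl y \in nbhd (WW N) (RR N) (inr e)) = (y \in zd_vertices N) && (y \in e).
Proof. by rewrite /nbhd in_set /total_vertices in_set /=. Qed.
Lemma nb_rr N (e f : {set 'I_N}) : (inr f \in nbhd (WW N) (RR N) (inr e)) = [&& f \in GE N, f != e & e :&: f != set0].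
Proof.
rewrite /nbhd in_set /total_vertices in_set /= inr_neq eq_sym.
by case: (e != f); rewrite /= ?andbF.
Qed.
Lemma inW_l N (y : 'I_N) : (inl y \in WW N) = (y \in zd_vertices N).
Proof. by rewrite /total_vertices in_set. Qed.
Lemma inW_r N (e : {set 'I_N}) : (inr e \in WW N) = (e \in GE N).
Proof. by rewrite /total_vertices in_set. Qed.

Definition goodZ p N (Z : {set 'I_N + {set 'I_N}}) s0 :=
  [/\ Z \subset WW N, (forall y, y \in zd_vertices N -> (inl y \in Z) = (y \in Aset N p)) &
      (forall f, f \in GE N -> (inr f \in Z) = (col f == s0))].

Lemma balq p q N (c : nat) s : setting p q N ->
  #|mset N q c s| <= #|mset N q c (~~ s)|.
Proof.
case=> pp pq /andP[op oq] _ eN; apply: balance; rewrite ?prime_gt0 //.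
  by rewrite eN dvdn_mull.
by rewrite eN mulnK ?prime_gt0.
Qed.

Lemma Aq_gt0 p q N : setting p q N -> 0 < #|Aset N q|.
Proof.
case=> pp pq _ _ eN.
have qN : q < N by rewrite eN ltn_Pmull ?prime_gt1 ?prime_gt0.
apply/card_gt0P; exists (Ordinal qN); rewrite inE /= -lt0n prime_gt0 //= dvdnn.
Qed.

Lemma vtx p q N (a : 'I_N) Z s0 : setting p q N -> goodZ p Z s0 -> a \in Aset N p ->
  #|nbhd (WW N) (RR N) (inl a) :&: Z| < #|nbhd (WW N) (RR N) (inl a) :&: (WW N :\: Z)|.
Proof.
move=> st [ZW Zl Zr] aA.
have aV := AV st aA.
rewrite !card_sum.
have L1 : [set y | inl y \in nbhd (WW N) (RR N) (inl a) :&: Z] = set0.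
  apply/setP => y; rewrite in_set in_set0 in_setI nb_ll.
  apply/negP => /andP[/andP[yV ad] yZ].
  rewrite (Zl _ yV) in yZ; rewrite (adjV st aV yV) aA /= in ad.
  case/orP: ad => [yB | /andP[aB _]].
  - exact: (AB_disj st yZ yB).
  - exact: (AB_disj st aA aB).
have R1 : [set e | inr e \in nbhd (WW N) (RR N) (inl a) :&: Z] \subset Eat a s0.
  apply/subsetP => e; rewrite in_set in_setI nb_lr => /andP[/andP[eG ae] eZ].
  by rewrite (Zr _ eG) in eZ; rewrite inEat eG ae eZ.
have L2 : Aset N q \subset [set y | inl y \in nbhd (WW N) (RR N) (inl a) :&: (WW N :\: Z)].
  apply/subsetP => y yB; have yV := BV st yB.
  rewrite in_set in_setI in_setD nb_ll inW_l yV (Zl _ yV) (adjV st aV yV) aA yB /=.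
  by rewrite andbT; apply/negP => yA; apply: (AB_disj st yA yB).
have R2 : Eat a (~~ s0) \subset [set e | inr e \in nbhd (WW N) (RR N) (inl a) :&: (WW N :\: Z)].
  apply/subsetP => e; rewrite inEat => /and3P[eG ae /eqP ce].
  rewrite in_set in_setI in_setD nb_lr inW_r eG ae (Zr _ eG) ce.
  by case: (s0).

have c1 := card_Eat s0 st aA; have c2 := card_Eat (~~ s0) st aA.
have bal := balq (val a) s0 st.
have q0 := Aq_gt0 st.
rewrite L1 cards0; apply: leq_trans (leq_add (subset_leq_card L2) (subset_leq_card R2)).
have := subset_leq_card R1=> h.
rewrite add0n c2; apply: leq_ltn_trans h _; rewrite c1; apply: leq_ltn_trans bal _.
by rewrite -[X in X < _]add0n ltn_add2r.
Qed.

Lemma arith x1 x2 y1 y2 a0 a0' b0 b0' a1 b1 : x1 <= 1 -> x2 <= a0' + b0' -> 0 < y1 ->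
  a1 + b1 <= y2 -> a0 = 1 + a0' -> b0 = 1 + b0' -> a0 <= a1 -> b0 <= b1 -> x1 + x2 < y1 + y2.
Proof. lia. Qed.

Lemma edg p q N (a b : 'I_N) Z s0 : setting p q N -> goodZ p Z s0 ->
  a \in Aset N p -> b \in Aset N q -> col [set a; b] = s0 ->
  #|nbhd (WW N) (RR N) (inr [set a; b]) :&: Z| <
  #|nbhd (WW N) (RR N) (inr [set a; b]) :&: (WW N :\: Z)|.
Proof.
move=> st [ZW Zl Zr] aA bB ce.
have aV := AV st aA; have bV := BV st bB.
have eG : [set a; b] \in GE N by apply/(gedgesP _ st); exists a, b.
rewrite !card_sum.
have L1 : [set y | inl y \in nbhd (WW N) (RR N) (inr [set a; b]) :&: Z] \subset [set a].
  apply/subsetP => y; rewrite in_set in_setI nb_rl => /andP[/andP[yV ye] yZ].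
  rewrite (Zl _ yV) in yZ; rewrite in_set1.
  move: ye; rewrite in_set2 => /orP[-> // | /eqP eyb]; subst; case: (AB_disj st yZ bB).
have R1 : [set f | inr f \in nbhd (WW N) (RR N) (inr [set a; b]) :&: Z] \subset
          (Eat a s0 :\ [set a; b]) :|: (Eat b s0 :\ [set a; b]).
  apply/subsetP => f; rewrite in_set in_setI nb_rr => /andP[/and3P[fG fe ef] fZ].
  rewrite (Zr _ fG) in fZ.
  case/set0Pn: ef => z; rewrite in_setI in_set2 => /andP[/orP[/eqP za|/eqP zb] zf]; subst z.
  - by rewrite in_setU !in_setD1 !inEat fG fe fZ zf.
  - by rewrite in_setU !in_setD1 !inEat fG fe fZ zf orbT.
have L2 : [set b] \subset [set y | inl y \in nbhd (WW N) (RR N) (inr [set a; b]) :&: (WW N :\: Z)].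
  apply/subsetP => y; rewrite in_set1 => /eqP ->.
  rewrite in_set in_setI in_setD nb_rl inW_l bV (Zl _ bV) set22 /= andbT.
  by apply/negP => bA; apply: (AB_disj st bA bB).
have R2 : Eat a (~~ s0) :|: Eat b (~~ s0) \subset
          [set f | inr f \in nbhd (WW N) (RR N) (inr [set a; b]) :&: (WW N :\: Z)].
  apply/subsetP => f.
  have H v : v \in [set a; b] -> f \in Eat v (~~ s0) ->
      f \in [set f | inr f \in nbhd (WW N) (RR N) (inr [set a; b]) :&: (WW N :\: Z)].
    move=> ve; rewrite inEat => /and3P[fG vf /eqP cf].
    rewrite in_set in_setI in_setD nb_rr inW_r fG (Zr _ fG) cf /=.
    have -> : f != [set a; b] by apply/eqP => fe; rewrite fe ce in cf; case: (s0) cf.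
    have -> : [set a; b] :&: f != set0 by apply/set0Pn; exists v; rewrite in_setI ve vf.
    by case: (s0).
  by rewrite in_setU => /orP[]; apply: H; rewrite ?set21 ?set22.
have disj : Eat a (~~ s0) :&: Eat b (~~ s0) = set0.
  apply/setP => f; rewrite in_set0 in_setI !inEat.
  apply/negP => /andP[/and3P[fG af /eqP cf] /and3P[_ bf _]].
  have fe := edge_uniq st fG aA bB af bf.
  by rewrite fe ce in cf; case: (s0) cf.
have ea : [set a; b] \in Eat a s0 by rewrite inEat eG set21 ce eqxx.
have eb : [set a; b] \in Eat b s0 by rewrite inEat eG set22 ce eqxx.
have ca0 := card_Eat s0 st aA; have ca1 := card_Eat (~~ s0) st aA.
have cb0 := card_Eat s0 (setting_sym st) bB; have cb1 := card_Eat (~~ s0) (setting_sym st) bB.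
have bala := balq (val a) s0 st.
have balb := balq (val b) s0 (setting_sym st).
have hL1 := subset_leq_card L1; rewrite cards1 in hL1.
have hR1 := leq_trans (subset_leq_card R1) (leq_card_setU _ _).
have hL2 := subset_leq_card L2; rewrite cards1 in hL2.
have hR2 := subset_leq_card R2; rewrite cardsU disj cards0 subn0 in hR2.
have da := cardsD1 [set a; b] (Eat a s0); rewrite ea in da.
have db := cardsD1 [set a; b] (Eat b s0); rewrite eb in db.
apply: (arith hL1 hR1 hL2 hR2 da db); [rewrite ca0 ca1 | rewrite cb0 cb1] => //.
Qed.

Theorem mainTheorem9 (p q : nat) :
  prime p -> prime q -> 3 <= p -> p < q ->
  very_cost_effective
    (total_vertices (zd_vertices (p * q)) (@zd_adj (p * q)))
    (total_adj (@zd_adj (p * q))).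
Proof.
move=> pp pq p3 pltq.
have op : odd p by case: (even_prime pp) => // p2; rewrite p2 in p3.
have oq : odd q by case: (even_prime pq) => // q2; rewrite q2 in pltq; move: (leq_trans p3 (ltnW pltq)).
have st : setting p q (p * q) by split => //; [rewrite op oq | rewrite neq_ltn pltq].
pose S : {set 'I_(p * q) + {set 'I_(p * q)}} :=
  [set x | match x with inl v => v \in Aset (p * q) p | inr e => (e \in GE (p * q)) && ~~ col e end].
have SW : S \subset WW (p * q).
  apply/subsetP => [[v|e]]; rewrite /S in_set /=.
  - by rewrite inW_l; apply: (AV st).
  - by rewrite inW_r => /andP[].
have gS : goodZ p S false.
  split=> // [y yV | f fG]; rewrite /S in_set //= fG /=.
  by case: (col f).
have gS' : goodZ q (WW (p * q) :\: S) true.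
  split.
  - exact: subsetDl.
  - move=> y yV; rewrite in_setD inW_l yV /S in_set /= andbT.
    apply/idP/idP => [nA | yB].
    + move: (yV); rewrite (zdV _ st) => /andP[y0 /orP[py|qy]].
      * by move: nA; rewrite inE y0 py.
      * by rewrite inE y0 qy.
    + by apply/negP => yA; apply: (AB_disj st yA yB).
  - move=> f fG; rewrite in_setD inW_r fG /S in_set /= fG /= andbT.
    by case: (col f).
exists S; apply/and3P; split => //.
- apply/forallP => -[a|e]; apply/implyP; rewrite /S in_set /= => h.
  + exact: (vtx st gS h).
  + case/andP: h => eG ce.
    case/(gedgesP _ st): eG => a [b [aA bB ee]]; subst e.
    by apply: (edg st gS aA bB); apply/negbTE.
- apply/forallP => -[b|e]; apply/implyP => h.
  + have bV : b \in zd_vertices (p * q) by move: h; rewrite in_setD inW_l => /andP[].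
    case: (gS') => _ Zl _; rewrite (Zl _ bV) in h.
    exact: (vtx (setting_sym st) gS' h).
  + have eG : e \in GE (p * q) by move: h; rewrite in_setD inW_r => /andP[].
    case: (gS') => _ _ Zr; rewrite (Zr _ eG) in h.
    case/(gedgesP _ st): eG => a [b [aA bB ee]]; subst e.
    have -> : [set a; b] = [set b; a] by rewrite setUC.
    apply: (edg (setting_sym st) gS' bB aA).
    by rewrite setUC; apply/eqP.
Qed.
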